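(* Let $p$ be a prime and let $n,m,N\in\mathbb{N}$ with $0<n\le m<N/3$. Then $n\mid_p m$ if and only if there exists $\alpha\in\mathbb{F}_p[t]/(t^N)$ such that $$\alpha^p(t^n-t^m)=t^nt^m(1-\alpha^{p-1}) \quad\text{and}\quad \alpha^{3p}\neq 0 \quad\text{in } \mathbb{F}_p[t]/(t^N).$$
   Context: For $n,m\in\mathbb{N}$, $n\mid_p m$ means $m=p^s n$ for some $s\in\mathbb{N}$. *)

(* Defs.v *)
From mathcomp Require Import all_boot all_order all_algebra.
Set Implicit Arguments. Unset Strict Implicit. Unset Printing Implicit Defensive.
Import GRing.Theory.
Local Open Scope ring_scope.

Definition pdvd (p n m : nat) : Prop := exists s : nat, m = (p ^ s * n)%N.

(* Equality in the quotient ring F[t]/(t^N), with elements represented by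
   polynomials in {poly F}: a = b in F[t]/(t^N) iff t^N divides a - b. *)
Definition eq_mod_tN (F : fieldType) (N : nat) (a b : {poly F}) : bool :=
  ('X^N %| a - b)%R.

(* Main.v *)
Require Import Defs.
From mathcomp Require Import all_boot all_order all_algebra all_field.
From mathcomp Require Import ring zify.
Import GRing.Theory.
Local Open Scope ring_scope.


Lemma addFrob (p : nat) (hp : prime p) (a b : {poly 'F_p}) :
  (a + b) ^+ p = a ^+ p + b ^+ p.
Proof.
have ch : p \in [pchar {poly 'F_p}] by rewrite pchar_poly pchar_Fp.
rewrite -!(pFrobenius_autE ch). apply: pFrobenius_autD_comm. exact: mulrC.
Qed.

Lemma frobC (p : nat) (hp : prime p) (c : 'F_p) : c ^+ p = c.
Proof.
have := expf_card c. by rewrite card_Fp.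
Qed.

Lemma frob_comp (p : nat) (hp : prime p) (q : {poly 'F_p}) :
  q ^+ p = q \Po 'X^p.
Proof.
elim/poly_ind: q => [|q c IH].
  by rewrite comp_poly0 expr0n gtn_eqF // prime_gt0.
rewrite addFrob // exprMn IH comp_polyD comp_polyM comp_polyX comp_polyC.
by rewrite -rmorphXn frobC.
Qed.

Lemma dvdXn_coef (F : fieldType) (K : nat) (q : {poly F}) (i : nat) :
  'X^K %| q -> (i < K)%N -> q`_i = 0.
Proof.
move=> /dvdpP [r ->] hi. by rewrite coefMXn hi.
Qed.

Lemma trunc_inv (F : fieldType) (K : nat) (g : {poly F}) :
  g`_0 != 0 -> exists d, 'X^K %| g * d - 1.
Proof.
move=> g0; elim: K => [|K [d /dvdpP [r hr]]].
  by exists 0; rewrite expr0 dvd1p.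
set c := ((g`_0)^-1)%:P.
exists (d - c * (r * 'X^K)).
have hgd : g * d = r * 'X^K + 1 by rewrite -hr subrK.
have -> : g * (d - c * (r * 'X^K)) - 1 = (r * 'X^K) * (1 - c * g).
  rewrite mulrBr hgd; ring.
rewrite exprSr. apply: dvdp_mul; first exact: dvdp_mull.
have -> : ('X : {poly F}) = 'X - 0%:P by rewrite polyC0 subr0.
rewrite dvdp_XsubCl /root horner_coef0 coefB coef1 coefCM mulVf //.
by rewrite subrr.
Qed.

Lemma sumFrob (p : nat) (hp : prime p) (s : nat) (F : nat -> {poly 'F_p}) :
  (\sum_(0 <= i < s) F i) ^+ p = \sum_(0 <= i < s) (F i) ^+ p.
Proof.
apply: (big_morph (fun x => x ^+ p)).
  by move=> a b; apply: addFrob.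
by rewrite expr0n gtn_eqF // prime_gt0.
Qed.

Lemma dvd_pow1 (F : fieldType) (N j : nat) (u : {poly F}) :
  'X^N %| u - 1 -> 'X^N %| u ^+ j - 1.
Proof.
move=> h; elim: j => [|j IH]; first by rewrite expr0 subrr dvdp0.
have -> : u ^+ j.+1 - 1 = (u ^+ j - 1) * u + (u - 1) by rewrite exprSr; ring.
by apply: dvdp_add => //; apply: dvdp_mulr.
Qed.

Lemma coef0X (F : fieldType) (q : {poly F}) j : (q ^+ j)`_0 = q`_0 ^+ j.
Proof.
elim: j => [|j IH]; first by rewrite !expr0 coef1.
by rewrite !exprS coef0M IH.
Qed.

Lemma fwd (p n s N : nat) (hp : prime p) (hn : (0 < n)%N)
  (hmN : (3 * (p ^ s * n) < N)%N) :
  exists alpha : {poly 'F_p},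
    eq_mod_tN N (alpha ^+ p * ('X^n - 'X^(p ^ s * n)))
                ('X^n * 'X^(p ^ s * n) * (1 - alpha ^+ (p.-1)))
    /\ ~~ eq_mod_tN N (alpha ^+ (3 * p)) 0.
Proof.
have p1 : (1 < p)%N := prime_gt1 hp.
have N0 : (0 < N)%N by lia.
case: s hmN => [|s'] hmN.
  exists 1; rewrite /eq_mod_tN !expr1n expn0 mul1n !subrr !mulr0 subrr dvdp0 subr0.
  split => //; apply/negP => /(@dvdXn_coef _ _ _ 0) h.
  by move: (h N0); rewrite coef1 /= => /eqP; rewrite oner_eq0.
set m := (p ^ s'.+1 * n)%N.
set k := (p ^ s' * n)%N.
have hkp : (k * p = m)%N by rewrite /k /m expnSr; lia.
set G : {poly 'F_p} := \sum_(0 <= i < s'.+1) 'X^(k - p ^ i * n).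
have G0 : G`_0 = 1.
  rewrite /G big_nat_recr //= coefD coef_sum coefXn subnn eqxx big1_seq ?add0r //.
  move=> i; rewrite mem_index_iota => /andP [_ hi].
  rewrite coefXn.
  have : (p ^ i * n < k)%N by rewrite /k ltn_pmul2r // ltn_exp2l.
  move=> hlt; have -> : (0 == k - p ^ i * n)%N = false by apply/eqP; lia.
  by [].
have [d hd] : exists d, 'X^N %| G * d - 1 by apply: trunc_inv; rewrite G0 oner_eq0.
exists ('X^k * d).
set P := p.-1.
have hpP : p = P.+1 by rewrite /P prednK // prime_gt0.
have d0 : d`_0 = 1.
  have := @dvdXn_coef _ _ _ 0 hd N0.
  by rewrite coefB coef0M G0 mul1r coef1 /= => /eqP; rewrite subr_eq0 => /eqP.
split.
  rewrite /eq_mod_tN.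
  set xn : {poly 'F_p} := 'X^n.
  set xm : {poly 'F_p} := 'X^m.
  have hT : 'X^(k * p)%N * (xn - xm) - xn * xm * G^+p + xn * xm * 'X^(k * P)%N * G = 0.
    rewrite (sumFrob _ hp).
    set f := fun i => (n + 2 * m - p ^ i * n)%N.
    have hA : forall i, (i < s'.+1)%N -> (p ^ i * n <= k)%N /\ (p ^ i.+1 * n = p ^ i * n * p)%N.
      move=> i hi; split; first by rewrite /k leq_pmul2r // leq_exp2l.
      by rewrite expnSr mulnAC.
    have s1 : xn * xm * \sum_(0 <= i < s'.+1) ('X^(k - p ^ i * n)) ^+ p
              = \sum_(0 <= i < s'.+1) 'X^(f i.+1) :> {poly 'F_p}.
      rewrite big_distrr; apply: eq_big_nat => i /andP [_ hi].
      rewrite -exprM /xn /xm -!exprD /= -exprD /f; congr (_ ^+ _).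
      have [h1 h2] := hA i hi; rewrite h2 mulnBl.
      have : (p ^ i * n * p <= k * p)%N by rewrite leq_mul2r h1 orbT.
      lia.
    have s2 : xn * xm * 'X^(k * P) * \sum_(0 <= i < s'.+1) 'X^(k - p ^ i * n)
              = \sum_(0 <= i < s'.+1) 'X^(f i) :> {poly 'F_p}.
      rewrite big_distrr; apply: eq_big_nat => i /andP [_ hi].
      rewrite /xn /xm -!exprD /= -!exprD /f; congr (_ ^+ _).
      have [h1 h2] := hA i hi.
      have : (k * P + k = m)%N by rewrite -hkp /P; case: (p) p1 => // q _; lia.
      lia.
    have ht := telescope_sumr (fun i => 'X^(f i) : {poly 'F_p}) (leq0n s'.+1).
    rewrite sumrB in ht.
    rewrite s1 s2 (_ : \sum_(0 <= i < s'.+1) 'X^(f i.+1) = \sum_(0 <= i < s'.+1) 'X^(f i) + ('X^(f s'.+1) - 'X^(f 0%N))); last by rewrite -ht addrC subrK.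
    rewrite /f.
    rewrite expn0 mul1n -/m hkp /xn /xm.
    have -> : (n + 2 * m - m = m + n)%N by lia.
    have -> : (n + 2 * m - n = m + m)%N by lia.
    rewrite !exprD; ring.
  have hkey : 'X^N %| G^+p * (('X^k * d) ^+ p * (xn - xm) - xn * xm * (1 - ('X^k * d) ^+ P)).
    have -> : G^+p * (('X^k * d) ^+ p * (xn - xm) - xn * xm * (1 - ('X^k * d) ^+ P))
      = ('X^(k * p)%N * (xn - xm) - xn * xm * G^+p + xn * xm * 'X^(k * P)%N * G)
        + ('X^(k * p)%N * ((G * d)^+p - 1) * (xn - xm) + xn * xm * 'X^(k * P)%N * G * ((G * d)^+P - 1)).
      have e1 : forall x : {poly 'F_p}, x ^+ p = x * x ^+ P.
        by move=> x; rewrite /P -exprS prednK // prime_gt0.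
      have e2 : 'X^(k * p)%N = 'X^(k * P)%N * 'X^k :> {poly 'F_p}.
        by rewrite -exprD; congr ('X^_); rewrite /P; case: (p) p1 => // q _; lia.
      rewrite !exprMn -!exprM e2 !e1; ring.
    rewrite hT add0r; apply: dvdp_add.
      by apply: dvdp_mulr; apply: dvdp_mull; apply: dvd_pow1.
    by apply: dvdp_mull; apply: dvd_pow1.
  set Q := (_ - _) in hkey *.
  have -> : Q = d^+p * (G^+p * Q) - ((G * d)^+p - 1) * Q by rewrite exprMn; ring.
  apply: dvdp_sub; first exact: dvdp_mull.
  by apply: dvdp_mulr; apply: dvd_pow1.
rewrite /eq_mod_tN subr0; apply/negP => /(@dvdXn_coef _ _ _ (3 * m)) h.
have := h hmN.
rewrite exprMn -exprM coefXnM.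
have -> : (k * (3 * p) = 3 * m)%N by rewrite -hkp; lia.
by rewrite ltnn subnn coef0X d0 expr1n => /eqP; rewrite oner_eq0.
Qed.

Lemma chain (p n v : nat) (hp : prime p) (eta : {poly 'F_p})
  (hrel : forall x, (0 < x)%N -> (x <= v)%N -> x <> n -> eta`_(v - x) != 0 ->
           exists y, x = (p * y)%N /\ eta`_(v - y) != 0) :
  forall x, (0 < x)%N -> (x <= v)%N -> eta`_(v - x) != 0 -> exists j, x = (p ^ j * n)%N.
Proof.
have p1 : (1 < p)%N := prime_gt1 hp.
elim/ltn_ind => x IH x0 xv ex.
case: (eqVneq x n) => [->|xn]; first by exists 0%N; rewrite expn0 mul1n.
have [y [hy ey]] := hrel x x0 xv (elimN eqP xn) ex.
have y0 : (0 < y)%N by move: x0; rewrite hy; case: y {hy ey} => //; rewrite muln0.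
have [j hj] : exists j, y = (p ^ j * n)%N by apply: IH => //; nia.
by exists j.+1; rewrite hy hj expnS mulnA.
Qed.

Lemma bwd (p n m N : nat) (hp : prime p)
  (hn : (0 < n)%N) (hnm : (n <= m)%N) (hmN : (3 * m < N)%N)
  (alpha : {poly 'F_p})
  (H : eq_mod_tN N (alpha ^+ p * ('X^n - 'X^m))
                ('X^n * 'X^m * (1 - alpha ^+ (p.-1))))
  (H2 : ~~ eq_mod_tN N (alpha ^+ (3 * p)) 0) : pdvd p n m.
Proof.
have p1 : (1 < p)%N := prime_gt1 hp.
case: (eqVneq m n) => [->|mn]; first by exists 0%N; rewrite expn0 mul1n.
have ltnm : (n < m)%N by rewrite ltn_neqAle eq_sym mn.
have a0 : alpha != 0.
  apply/eqP => a0; move: H2; rewrite a0 expr0n muln_eq0 (gtn_eqF (prime_gt0 hp)) /=.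
  by rewrite /eq_mod_tN subr0 dvdp0.
have exi : exists i, alpha`_i != 0.
  by exists (size alpha).-1; rewrite -lead_coefE lead_coef_eq0.
case: (ex_minnP exi) => v hv hmin.
set eps := drop_poly v alpha.
have halpha : alpha = eps * 'X^v.
  rewrite -{1}(poly_take_drop v alpha) (_ : take_poly v alpha = 0) ?add0r //.
  apply/polyP => i; rewrite coef_take_poly coef0.
  case: ifP => // iv; apply/eqP; apply: contraLR iv => h.
  by rewrite -leqNgt; apply: hmin.
have e0 : eps`_0 = alpha`_v by rewrite coef_drop_poly add0n.
set P := p.-1.
have hpP : p = P.+1 by rewrite /P prednK // prime_gt0.
have e1 : forall x : {poly 'F_p}, x ^+ p = x * x ^+ P.
  by move=> x; rewrite /P -exprS prednK // prime_gt0.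
move: H; rewrite /eq_mod_tN.
set Q := (_ - _) => H.
have hQ : Q = 'X^(v * p + n) * eps ^+ p - 'X^(v * p + m) * eps ^+ p - 'X^(n + m)
              + 'X^(n + m + v * P) * eps ^+ P.
  rewrite /Q halpha !exprMn -!exprM !exprD; ring.
have cQ := fun j => @dvdXn_coef _ _ _ j H.
have ev0 : eps`_0 != 0 by rewrite e0.
have hvp : (v * p = m)%N.
  case: (ltngtP (v * p) m) => // h.
    have := cQ (v * p + n)%N; rewrite hQ !coefD !coefN !coefXnM coefXn ltnn subnn.
    rewrite (_ : (v * p + n < v * p + m)%N = true); last by lia.
    rewrite (_ : (v * p + n == n + m)%N = false); last by lia.
    rewrite (_ : (v * p + n < n + m + v * P)%N = true); last by lia.
    have hj : (v * p + n < N)%N by lia.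
    rewrite subr0 addr0 subr0 coef0X => /(_ hj)/eqP.
    by rewrite expf_eq0 (negbTE ev0) andbF.
  have v0 : (0 < v)%N by case: (v) h => //; rewrite mul0n.
  have P0 : (0 < P)%N by rewrite /P; lia.
  have := cQ (n + m)%N; rewrite hQ !coefD !coefN !coefXnM coefXn eqxx.
  rewrite (_ : (n + m < v * p + n)%N = true); last by lia.
  rewrite (_ : (n + m < v * p + m)%N = true); last by lia.
  rewrite (_ : (n + m < n + m + v * P)%N = true); last by lia.
  have hj : (n + m < N)%N by lia.
  rewrite subr0 sub0r addr0 => /(_ hj)/eqP.
  by rewrite oppr_eq0 oner_eq0.
have v0 : (0 < v)%N by case: (v) hvp => //= h; lia.
have hvP : (v * P + v = m)%N by rewrite -hvp /P; case: (p) p1 => // q _; lia.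
have P0 : (0 < P)%N by rewrite /P; lia.
have vm : (v < m)%N by nia.
have [eta heta] : exists d, 'X^N %| eps * d - 1 by apply: trunc_inv.
have N0 : (0 < N)%N by lia.
have eta0 : eta`_0 != 0.
  apply/eqP => h0; have := @dvdXn_coef _ _ _ 0 heta N0.
  by rewrite coefB coef0M h0 mulr0 coef1 /= sub0r => /eqP; rewrite oppr_eq0 oner_eq0.
set r := 1 - 'X^(m - n) - eta ^+ p + 'X^(v * P) * eta.
have hr : 'X^(N - (n + m)) %| r.
  have hXr : 'X^N %| 'X^(n + m) * r.
    have -> : 'X^(n + m) * r = eta ^+ p * Q - (((eps * eta) ^+ p - 1) * ('X^(m + n) - 'X^(m + m))
                + ((eps * eta) ^+ P - 1) * 'X^(n + m + v * P) * eta).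
      have hm : 'X^m = 'X^n * 'X^(m - n) :> {poly 'F_p} by rewrite -exprD subnKC // ltnW.
      rewrite hQ hvp /r !exprD hm !exprMn !e1; ring.
    apply: dvdp_sub; first exact: dvdp_mull.
    apply: dvdp_add; first by apply: dvdp_mulr; apply: dvd_pow1.
    by apply: dvdp_mulr; apply: dvdp_mulr; apply: dvd_pow1.
  have eN : 'X^N = 'X^(n + m) * 'X^(N - (n + m)) :> {poly 'F_p}.
    by rewrite -exprD subnKC //; lia.
  by rewrite eN dvdp_mul2l ?monic_neq0 ?monicXn in hXr.
have cr := fun k => @dvdXn_coef _ _ _ k hr.
have hrel : forall x, (0 < x)%N -> (x <= v)%N -> x <> n -> eta`_(v - x) != 0 ->
           exists y, x = (p * y)%N /\ eta`_(v - y) != 0.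
  move=> x x0 xv xn ex.
  have klt : (m - x < N - (n + m))%N by lia.
  have := cr (m - x)%N klt.
  rewrite /r !coefD !coefN coef1 coefXn coefXnM frob_comp // coef_comp_poly_Xn ?prime_gt0 //.
  rewrite (_ : (m - x == 0)%N = false); last by lia.
  rewrite (_ : (m - x == m - n)%N = false); last by lia.
  rewrite (_ : (m - x < v * P)%N = false); last by lia.
  rewrite (_ : (m - x - v * P = v - x)%N); last by lia.
  rewrite subrr sub0r.
  have pm : (p %| m)%N by rewrite -hvp dvdn_mull.
  rewrite dvdn_subr ?pm //; last by lia.
  case: ifP => hd heq; last by move: heq; rewrite oppr0 add0r => /eqP; rewrite (negbTE ex).
  case/dvdnP: hd heq => y hy heq; exists y; split; first by rewrite hy mulnC.
  move: heq; rewrite (_ : ((m - x) %/ p = v - y)%N); last first.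
    rewrite (_ : (m - x = (v - y) * p)%N) ?mulnK ?prime_gt0 //.
    by rewrite hy -hvp mulnBl.
  by move/eqP; rewrite addrC subr_eq0 => /eqP <-.
have [j hj] : exists j, v = (p ^ j * n)%N.
  by apply: (@chain p n v hp eta hrel v v0 (leqnn v)); rewrite subnn.
by exists j.+1; rewrite -hvp hj expnSr; lia.
Qed.

Theorem mainTheorem6 (p n m N : nat) (hp : prime p)
  (hn : (0 < n)%N) (hnm : (n <= m)%N) (hmN : (3 * m < N)%N) :
  pdvd p n m <->
  exists alpha : {poly 'F_p},
    eq_mod_tN N (alpha ^+ p * ('X^n - 'X^m))
                ('X^n * 'X^m * (1 - alpha ^+ (p.-1)))
    /\ ~~ eq_mod_tN N (alpha ^+ (3 * p)) 0.
Proof.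
split.
  by case=> s hs; subst m; apply: fwd.
by case=> alpha [H H2]; exact: (@bwd p n m N hp hn hnm hmN alpha H H2).
Qed.
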